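(* Let $n\ge2$, let $T=(n;\sigma,\delta,\tau)$ with $\sigma,\delta,\tau\in\mathbb{R}$, $\tau\ne0$ and $\sigma=-\tau$ (a real shifted skew-symmetric tridiagonal Toeplitz matrix). Let $\varepsilon\in\mathbb{R}$ and let $E=(n;-e_1,e_0,e_1)$ with $e_0,e_1\in\mathbb{R}$ be such that $\tau+\varepsilon e_1$ is nonzero and has the same sign as $\tau$. Then for each $h=1,\dots,n$ the unit eigenvector $\widetilde x_h$ of $T$ and the corresponding unit eigenvector $\widetilde x_h^\varepsilon$ of $T+\varepsilon E$ satisfy $\cos\theta_{\widetilde x_h,\widetilde x_h^\varepsilon}=1$; i.e. the eigenvectors are perfectly conditioned with respect to structured perturbations preserving skew-symmetry and the signs of the off-diagonals.
   Context: $(n;\sigma,\delta,\tau)$ denotes the $n\times n$ tridiagonal Toeplitz matrix with diagonal $\delta$, superdiagonal $\tau$, subdiagonal $\sigma$. For $\sigma\tau\ne0$, the eigenvector associated with $\lambda_h=\delta+2\sqrt{\sigma\tau}\cos\frac{h\pi}{n+1}$ has components $(\sqrt{\sigma/\tau})^k\sin\frac{hk\pi}{n+1}$, $k=1,\dots,n$. For unit vectors $x,x'$, $\cos\theta_{x,x'}=|x^Hx'|$. *)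

(* Defs.v *)
From HB Require Import structures.
From mathcomp Require Import all_boot all_order all_algebra.
From mathcomp Require Import complex.
From mathcomp Require Import all_classical all_reals all_analysis.
Set Implicit Arguments. Unset Strict Implicit. Unset Printing Implicit Defensive.
Import Order.TTheory GRing.Theory Num.Theory.
Local Open Scope ring_scope.
Local Open Scope complex_scope.

Definition tridiag (C : ringType) (n : nat) (s d t : C) : 'M[C]_n :=
  \matrix_(i < n, j < n)
    if i == j then d
    else if j == i.+1 :> nat then t
    else if i == j.+1 :> nat then s
    else 0.

Definition adjC (R : rcfType) (m n : nat) (A : 'M[R[i]]_(m, n)) : 'M[R[i]]_(n, m) :=
  (map_mx (@Num.conj_op _) A)^T.

Definition hdot (R : rcfType) (n : nat) (x y : 'cV[R[i]]_n) : R[i] :=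
  (adjC x *m y) 0 0.

Definition unit_vec (R : rcfType) (n : nat) (x : 'cV[R[i]]_n) : Prop :=
  hdot x x = 1.

(* cos theta_{x,x'} = |x^H x'| for unit vectors x, x' *)
Definition cos_angle (R : rcfType) (n : nat) (x y : 'cV[R[i]]_n) : R[i] :=
  `| hdot x y |.

Definition eigvec (R : rcfType) (n : nat) (A : 'M[R[i]]_n) (lam : R[i])
  (x : 'cV[R[i]]_n) : Prop :=
  x != 0 /\ A *m x = lam *: x.

(* lambda_h = d + 2 sqrt(s t) cos(h pi/(n+1)), principal square root
   (sqrtC: the root with argument in [0, pi)). *)
Definition tt_eigval (R : realType) (n : nat) (s d t : R[i]) (h : nat) : R[i] :=
  d + 2%:R * sqrtC (s * t) * (cos (h%:R * pi / (n.+1)%:R))%:C.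

(* Main.v *)
Require Import Defs.
From HB Require Import structures.
From mathcomp Require Import all_boot all_order all_algebra.
From mathcomp Require Import complex.
From mathcomp Require Import all_classical all_reals all_analysis.
From mathcomp Require Import ring.
Import Order.TTheory GRing.Theory Num.Theory.
Local Open Scope ring_scope.
Local Open Scope complex_scope.

Set Implicit Arguments. Unset Strict Implicit.
Section Aux.
Variable C : comNzRingType.
Variable m : nat.

Definition xv (y : 'cV[C]_m.+1) (k : nat) : C :=
  if (k <= m)%N then y (inord k) 0 else 0.
Definition prv (y : 'cV[C]_m.+1) (k : nat) : C :=
  if k is k'.+1 then xv y k' else 0.

Lemma xv_ord (y : 'cV[C]_m.+1) (i : 'I_m.+1) : xv y i = y i 0.
Proof. by rewrite /xv -ltnS ltn_ord inord_val. Qed.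

Lemma sum_ind (y : 'cV[C]_m.+1) k : \sum_(j < m.+1) ((j : nat) == k)%:R * y j 0 = xv y k.
Proof.
rewrite /xv; case: ifP => hk.
  rewrite (bigD1 (inord k)) //= big1 ?addr0.
    by rewrite inordK // eqxx mul1r.
  move=> j hj; case: eqP => [ejk|]; last by rewrite mul0r.
  by move: hj; rewrite -ejk inord_val eqxx.
apply: big1 => j _; case: eqP => [ejk|]; last by rewrite mul0r.
by move: (ltn_ord j); rewrite ejk ltnS hk.
Qed.

Lemma sum_prev (y : 'cV[C]_m.+1) k : \sum_(j < m.+1) ((j : nat).+1 == k)%:R * y j 0 = prv y k.
Proof.
case: k => [|k] /=.
  by apply: big1 => j _; rewrite mul0r.
by rewrite -sum_ind.
Qed.

Lemma tridiag_entry (s d t : C) (i j : 'I_m.+1) :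
  tridiag m.+1 s d t i j = d * ((j : nat) == i)%:R + t * ((j : nat) == i.+1)%:R
     + s * ((j : nat).+1 == i)%:R.
Proof.
rewrite mxE.
have [eij|nij] := eqVneq i j.
  subst j; rewrite eqxx.
  have -> : ((i : nat) == i.+1) = false by elim: (i : nat).
  have -> : ((i : nat).+1 == i) = false by elim: (i : nat).
  by rewrite mulr1 !mulr0 !addr0.
have nij' : ((j : nat) == i) = false.
  by apply/negbTE; move: nij; rewrite eq_sym; apply: contra => /eqP h; apply/eqP/val_inj.
rewrite nij' mulr0 add0r.
case: eqP => [e1|n1].
  have -> : ((j : nat).+1 == i) = false by rewrite e1; elim: (i : nat).
  by rewrite mulr1 mulr0 addr0.
rewrite mulr0 add0r.
case: eqP => [e2|n2]; first by rewrite e2 eqxx mulr1.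
have -> : ((j : nat).+1 == i) = false by apply/eqP => h; apply: n2; rewrite h.
by rewrite mulr0.
Qed.

Lemma tridiag_row (s d t : C) (y : 'cV[C]_m.+1) (i : 'I_m.+1) :
  (tridiag m.+1 s d t *m y) i 0 = d * xv y i + t * xv y i.+1 + s * prv y i.
Proof.
rewrite mxE.
under eq_bigr => j _ do rewrite tridiag_entry !mulrDl -!mulrA.
rewrite !big_split /= -!mulr_sumr sum_ind sum_ind sum_prev.
by [].
Qed.

Lemma rec_zero a (y : 'cV[C]_m.+1) :
  (forall k, (k <= m)%N -> xv y k.+1 = a * xv y k + prv y k) ->
  xv y 0 = 0 -> y = 0.
Proof.
move=> hr h0.
have H : forall k, xv y k = 0 /\ xv y k.+1 = 0.
  elim=> [|k [IH1 IH2]].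
    split=> //; case: (leqP 0 m) => hm; first by rewrite hr // h0 mulr0 add0r.
    by rewrite /xv; case: ifP.
  split=> //; case: (leqP k.+1 m) => hm; first by rewrite hr // IH2 mulr0 add0r.
  by rewrite /xv; case: ifP => //; rewrite leqNgt ltnS (ltnW hm).
apply/matrixP => i j; rewrite ord1 mxE -xv_ord; exact: (H i).1.
Qed.

Lemma xv_lin (c e : C) (y z : 'cV[C]_m.+1) k :
  xv (c *: y - e *: z) k = c * xv y k - e * xv z k.
Proof. by rewrite /xv; case: ifP => _; rewrite ?mxE ?mulr0 ?subrr. Qed.

Lemma prv_lin (c e : C) (y z : 'cV[C]_m.+1) k :
  prv (c *: y - e *: z) k = c * prv y k - e * prv z k.
Proof. by case: k => [|k] /=; rewrite ?xv_lin ?mulr0 ?subrr. Qed.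

End Aux.
Set Implicit Arguments. Unset Strict Implicit.
Lemma row_rec (C : fieldType) m (y : 'cV[C]_m.+1) (d t lam : C) :
  t != 0 ->
  (forall i : 'I_m.+1, d * xv y i + t * xv y i.+1 + (- t) * prv y i = lam * xv y i) ->
  forall k, (k <= m)%N -> xv y k.+1 = ((lam - d) / t) * xv y k + prv y k.
Proof.
move=> ht hr k hk; have := hr (inord k); rewrite inordK // => e.
have e2 : t * xv y k.+1 = lam * xv y k - d * xv y k + t * prv y k.
  by rewrite -e; ring.
rewrite -(mulKf ht (xv y k.+1)) e2; field; exact: ht.
Qed.

Lemma hdot_sum (R : rcfType) n (x y : 'cV[R[i]]_n) :
  hdot x y = \sum_j (x j 0)^*%R * y j 0.
Proof. by rewrite /hdot /adjC !mxE; apply: eq_bigr => j _; rewrite !mxE. Qed.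

Lemma sqrtC_scale (R : rcfType) (k : R) (z : R[i]) : 0 <= k ->
  sqrtC ((k%:C) ^+ 2 * z) = k%:C * sqrtC z.
Proof.
move=> hk; rewrite rootCMl ?sqrCK // ?exprn_ge0 // ler0c //.
Qed.
Unset Implicit Arguments.
Theorem corollary2 (R : realType) (n : nat) (sigma delta tau eps e0 e1 : R)
  (hn : (2 <= n)%N) (htau : tau != 0) (hsig : sigma = - tau)
  (hpert : tau + eps * e1 != 0)
  (hsign : Num.sg (tau + eps * e1) = Num.sg tau)
  (h : nat) (h1 : (1 <= h)%N) (h2 : (h <= n)%N)
  (x xe : 'cV[R[i]]_n) :
  let T := tridiag n sigma%:C delta%:C tau%:C in
  let E := tridiag n (- e1)%:C e0%:C e1%:C in
  let Te := T + eps%:C *: E in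
  unit_vec x ->
  eigvec T (tt_eigval n sigma%:C delta%:C tau%:C h) x ->
  unit_vec xe ->
  eigvec Te (tt_eigval n (sigma + eps * (- e1))%:C (delta + eps * e0)%:C
                         (tau + eps * e1)%:C h) xe ->
  cos_angle x xe = 1.
Proof.
case: n hn h2 x xe => [//|m] hn h2 x xe T E Te ux [xnz ex] uxe [xenz exe].
set tau' := tau + eps * e1 in hpert hsign exe.
have htC : tau%:C != 0 :> R[i] by rewrite (inj_eq (@complexI _)).
have htC' : tau'%:C != 0 :> R[i] by rewrite (inj_eq (@complexI _)).
have rowx : forall i : 'I_m.+1, delta%:C * xv x i + tau%:C * xv x i.+1
      + (- tau%:C) * prv x i
    = tt_eigval m.+1 sigma%:C delta%:C tau%:C h * xv x i.
  move=> i; have := congr1 (fun M : 'M[R[i]]_(m.+1,1) => M i 0) ex.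
  by rewrite /= tridiag_row mxE -xv_ord hsig rmorphN.
have rowxe : forall i : 'I_m.+1, (delta + eps * e0)%:C * xv xe i + tau'%:C * xv xe i.+1
      + (- tau'%:C) * prv xe i
    = tt_eigval m.+1 (sigma + eps * (- e1))%:C (delta + eps * e0)%:C tau'%:C h * xv xe i.
  move=> i; have := congr1 (fun M : 'M[R[i]]_(m.+1,1) => M i 0) exe.
  have addE : forall (A B : 'M[R[i]]_(m.+1,1)) (a : R[i]),
      (A + a *: B) i 0 = A i 0 + a * B i 0 by move=> A B a; rewrite !mxE.
  rewrite /Te /T /E mulmxDl -scalemxAl addE !tridiag_row [RHS]mxE -xv_ord => <-.
  rewrite /tau' hsig !rmorphD !rmorphM !rmorphN /=; ring.
have recx := row_rec htC rowx.
have recxe := row_rec htC' rowxe.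
pose k := tau' / tau.
have kpos : 0 < k.
  rewrite -sgr_cp0 /k sgrM sgrV hsign -expr2 sqr_sg htau //.
have e1C : (sigma + eps * - e1)%:C * tau'%:C = (k%:C) ^+ 2 * (sigma%:C * tau%:C) :> R[i].
  have er : (sigma + eps * - e1) * tau' = k ^+ 2 * (sigma * tau).
    rewrite /k hsig /tau'; field; exact: htau.
  by rewrite -rmorphXn -!rmorphM er.
have ktC : tau'%:C = k%:C * tau%:C :> R[i].
  have er : tau' = k * tau by rewrite /k; field; exact: htau.
  by rewrite -rmorphM -er.
have kC : k%:C != 0 :> R[i] by rewrite (inj_eq (@complexI _)) gt_eqF.
have ha : (tt_eigval m.+1 (sigma + eps * - e1)%:C (delta + eps * e0)%:C tau'%:C h
          - (delta + eps * e0)%:C) / tau'%:C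
        = (tt_eigval m.+1 sigma%:C delta%:C tau%:C h - delta%:C) / tau%:C.
  rewrite /tt_eigval e1C sqrtC_scale ?ltW // ktC; field.
  by rewrite kC htC.
rewrite ha in recxe.
set a := (_ - _) / _ in recx recxe.
pose z := xv xe 0 *: x - xv x 0 *: xe.
have recz : forall k, (k <= m)%N -> xv z k.+1 = a * xv z k + prv z k.
  move=> j hj; rewrite /z !xv_lin prv_lin (recx j hj) (recxe j hj); ring.
have z0 : xv z 0 = 0 by rewrite /z xv_lin mulrC subrr.
have zz := rec_zero recz z0.
have hx0 : xv x 0 != 0.
  apply/eqP => h0; move/eqP: xnz; apply; exact: rec_zero recx h0.
have xeE : xe = (xv xe 0 / xv x 0) *: x.
  move/eqP: zz; rewrite /z subr_eq0 => /eqP ez.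
  by rewrite mulrC -scalerA ez scalerA mulVf // scale1r.
move: uxe; rewrite /unit_vec /cos_angle xeE; set cc := (_ / _).
have hxx : hdot x x = 1 := ux.
have H1 : hdot (cc *: x) (cc *: x) = cc^*%R * cc * hdot x x.
  rewrite !hdot_sum mulr_sumr; apply: eq_bigr => j _; rewrite !mxE rmorphM; ring.
have H2 : hdot x (cc *: x) = cc * hdot x x.
  rewrite !hdot_sum mulr_sumr; apply: eq_bigr => j _; rewrite !mxE; ring.
rewrite H1 H2 hxx !mulr1 => hc.
have : `|cc| ^+ 2 = 1 by rewrite normCK mulrC.
move=> hn2; rewrite -[LHS](sqrCK (normr_ge0 cc)) hn2 sqrtC1 //.
Qed.
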